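(* There is no semi-equivelar map of type $(3,6,4,6)$ (triangle, hexagon, quadrilateral, hexagon around each vertex, in this cyclic order) on the closed surface of Euler characteristic $-1$. *)

(* Defs.v *)
From HB Require Import structures.
From mathcomp Require Import all_boot all_order all_algebra.
Set Implicit Arguments. Unset Strict Implicit. Unset Printing Implicit Defensive.

Section Maps.
Variables (V F : finType) (cyc : F -> seq V).

Definition face_edge (f : F) (x y : V) : bool :=
  [&& x \in cyc f, x != y & (next (cyc f) x == y) || (next (cyc f) y == x)].

Definition adj (x y : V) : bool := [exists f, face_edge f x y].

Definition edges : {set {set V}} := [set [set p.1; p.2] | p in [set p : V * V | adj p.1 p.2]].

Definition euler_char : int := (#|V|%:Z - #|edges|%:Z + #|F|%:Z)%R.

Definition polyhedral_complex : Prop :=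
  [/\ forall f, uniq (cyc f) /\ 3 <= size (cyc f),
      forall x y, adj x y -> #|[set f | face_edge f x y]| = 2 &
      forall f g, f != g ->
        let S := [set x | (x \in cyc f) && (x \in cyc g)] in
        #|S| <= 1 \/
        exists x y, S = [set x; y] /\ face_edge f x y /\ face_edge g x y].

Definition map_connected : Prop := forall x y : V, connect adj x y.

(* Together with "each edge in exactly two faces" this makes the link of v a
   4-cycle, so the carrier is a closed surface. *)
Definition type_3646 : Prop :=
  forall v : V, exists f0 f1 f2 f3 : F,
    [/\ [set f | v \in cyc f] = [set f0; f1; f2; f3],
        #|[set f | v \in cyc f]| = 4,
        [/\ size (cyc f0) = 3, size (cyc f1) = 6,
            size (cyc f2) = 4 & size (cyc f3) = 6] &
        [/\ exists u, face_edge f0 v u && face_edge f1 v u,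
            exists u, face_edge f1 v u && face_edge f2 v u,
            exists u, face_edge f2 v u && face_edge f3 v u &
            exists u, face_edge f3 v u && face_edge f0 v u]].

Definition semi_equivelar_3646 : Prop :=
  [/\ polyhedral_complex, map_connected & type_3646].

End Maps.

(* Main.v *)
Require Import Defs.
From mathcomp Require Import all_boot all_order all_algebra zify.
Set Implicit Arguments. Unset Strict Implicit. Unset Printing Implicit Defensive.

Lemma rot_case (T : eqType) (s : seq T) x : uniq s -> x \in s ->
  exists s', [/\ uniq (x :: s'), size (x :: s') = size s & next s =1 next (x :: s')].
Proof.
move=> Us /rot_to[i s' Hr]; exists s'; rewrite -Hr rot_uniq size_rot; split=> //.
by move=> y; rewrite next_rot.
Qed.

Lemma next_neq (T : eqType) (s : seq T) x : uniq s -> 2 <= size s -> x \in s ->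
  next s x != x.
Proof.
move=> Us Hs xs; have [s' [U Sz E]] := rot_case Us xs; rewrite E.
case: s' U Sz {E} => [|a r] U Sz; first by rewrite -Sz in Hs.
move: U => /=; rewrite eqxx inE negb_or => /andP[/andP[H _] _].
by rewrite eq_sym.
Qed.

Lemma next2_neq (T : eqType) (s : seq T) x : uniq s -> 3 <= size s -> x \in s ->
  next s (next s x) != x.
Proof.
move=> Us Hs xs; have [s' [U Sz E]] := rot_case Us xs; rewrite !E.
case: s' U Sz {E} => [|a [|b r]] U Sz; try by rewrite -Sz in Hs.
move: U => /=; rewrite eqxx !inE !negb_or => /and4P[/and3P[xa xb _] _ _ _].
by rewrite eq_sym in xa; rewrite (negbTE xa) eqxx eq_sym.
Qed.

Lemma cardP_sum (T : finType) (P : pred T) : #|[set x | P x]| = \sum_x (P x : nat).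
Proof. by rewrite -sum1dep_card big_mkcond /=; apply: eq_bigr => x _; case: (P x). Qed.

Lemma dcount (I J : finType) (R : I -> J -> bool) :
  \sum_i #|[set j | R i j]| = \sum_j #|[set i | R i j]|.
Proof.
rewrite (eq_bigr (fun i => \sum_j (R i j : nat))); last by move=> i _; rewrite cardP_sum.
rewrite exchange_big /=; apply: eq_bigr => j _; by rewrite cardP_sum.
Qed.

Lemma card3 (T : finType) (a b c : T) : a != b -> a != c -> b != c ->
  #|[set a; b; c]| = 3.
Proof.
move=> ab ac bc; rewrite cardsU cards1 cardsU1 cards1 inE (negbTE ab) /=.
have -> : (a |: [set b]) :&: [set c] = set0.
  apply/setP=> x; rewrite !inE; apply/negP=> /andP[/orP[] /eqP-> /eqP E].
  - by rewrite E eqxx in ac.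
  - by rewrite E eqxx in bc.
by rewrite cards0.
Qed.

Lemma card_le3 (T : finType) (a b c : T) : #|[set a; b; c]| <= 3.
Proof.
rewrite cardsU cards1 cardsU1 cards1.
by case: (a \in [set b]) => /=; apply: leq_trans (leq_subr _ _) _.
Qed.

Lemma pairs_card (T : finType) (s : seq T) : uniq s -> 3 <= size s ->
  #|[set p : T * T | [&& p.1 \in s, p.1 != p.2 &
      (next s p.1 == p.2) || (next s p.2 == p.1)]]| = 2 * size s.
Proof.
move=> Us Hs.
have H2 : 2 <= size s by apply: ltnW.
set A := [set (x, next s x) | x in s]; set B := [set (next s x, x) | x in s].
have -> : [set p : T * T | [&& p.1 \in s, p.1 != p.2 &
      (next s p.1 == p.2) || (next s p.2 == p.1)]] = A :|: B.
  apply/setP=> [[a b]]; rewrite !inE /=; apply/idP/idP.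
    case/and3P=> [as_ ab /orP[] /eqP E].
      by apply/orP; left; apply/imsetP; exists a => //; rewrite E.
    apply/orP; right; apply/imsetP; exists b; last by rewrite E.
    by rewrite -mem_next E.
  case/orP=> /imsetP[x xs [-> ->]] /=.
    by rewrite xs eq_sym next_neq //= eqxx.
  by rewrite mem_next xs next_neq //= eqxx orbT.
rewrite cardsU.
have -> : A :&: B = set0.
  apply/setP=> [[a b]]; rewrite !inE; apply/negP=> /andP[/imsetP[x xs [E1 E2]] /imsetP[y ys [E3 E4]]].
  move: (next2_neq Us Hs ys); by rewrite -E3 -E4 E1 -E2 eqxx.
have cs : #|[set x in s]| = size s by rewrite cardsE; apply/card_uniqP.
rewrite cards0 subn0 !card_imset; first by rewrite (card_uniqP Us) mul2n addnn.
  by move=> x y [].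
by move=> x y [].
Qed.

Lemma fe_mem (V F : finType) (cyc : F -> seq V) f x y :
  face_edge cyc f x y -> x \in cyc f.
Proof. by case/and3P. Qed.

Lemma fe_sym (V F : finType) (cyc : F -> seq V) f x y :
  face_edge cyc f x y -> face_edge cyc f y x.
Proof.
case/and3P=> xs xy H; rewrite /face_edge eq_sym xy orbC H andbT.
rewrite andbT; by case/orP: H => /eqP E; [rewrite -E mem_next | rewrite -mem_next E].
Qed.

Lemma fe_nb (V F : finType) (cyc : F -> seq V) f x y : uniq (cyc f) ->
  face_edge cyc f x y -> (y == next (cyc f) x) || (y == prev (cyc f) x).
Proof.
move=> U /and3P[_ _ /orP[] /eqP E]; first by rewrite E eqxx.
by rewrite -E prev_next // eqxx orbT.
Qed.

Lemma three_faces (V F : finType) (cyc : F -> seq V) a b c x u :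
  polyhedral_complex cyc -> a != b -> a != c -> b != c ->
  face_edge cyc a x u -> face_edge cyc b x u -> face_edge cyc c x u -> False.
Proof.
case=> _ H2 _ ab ac bc fa fb fc.
have adjxu : adj cyc x u by apply/existsP; exists a.
have := H2 _ _ adjxu.
have : [set a; b; c] \subset [set f | face_edge cyc f x u].
  by apply/subsetP=> f; rewrite !inE => /orP[/orP[]|] /eqP->.
move=> /subset_leq_card; rewrite card3 // => le E; by rewrite E in le.
Qed.

Lemma vertex_info (V F : finType) (cyc : F -> seq V) v :
  type_3646 cyc -> exists f0 f1 f2 f3,
    [/\ forall f, (v \in cyc f) = [|| f == f0, f == f1, f == f2 | f == f3],
        [/\ size (cyc f0) = 3, size (cyc f1) = 6,
            size (cyc f2) = 4 & size (cyc f3) = 6],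
        f1 != f3 &
        [/\ exists u, face_edge cyc f0 v u && face_edge cyc f1 v u,
            exists u, face_edge cyc f1 v u && face_edge cyc f2 v u,
            exists u, face_edge cyc f2 v u && face_edge cyc f3 v u &
            exists u, face_edge cyc f3 v u && face_edge cyc f0 v u]].
Proof.
move=> /(_ v) [f0 [f1 [f2 [f3 [E C S A]]]]]; exists f0, f1, f2, f3; split=> //.
  by move=> f; move/setP: E => /(_ f); rewrite !inE => ->; rewrite !orbA.
apply/negP=> /eqP e; move: C; rewrite E e.
have -> : [set f0; f3; f2; f3] = [set f0; f3; f2].
  by apply/setP=> f; rewrite !inE; case: (f == f3); rewrite ?orbT ?orbF.
by move=> C; have := card_le3 f0 f3 f2; rewrite C.
Qed.

Lemma no_hexhex (V F : finType) (cyc : F -> seq V) g g' x y :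
  polyhedral_complex cyc -> type_3646 cyc -> g != g' ->
  size (cyc g) = 6 -> size (cyc g') = 6 ->
  face_edge cyc g x y -> face_edge cyc g' x y -> False.
Proof.
move=> Hpc Ht ngg sg sg' eg eg'.
have [f0 [f1 [f2 [f3 [M [s0 s1 s2 s3] n13 [[u1 /andP[a0 a1]] [u2 /andP[b1 b2]] _ _]]]]]] :=
  vertex_info x Ht.
have U1 : uniq (cyc f1) by case: Hpc => /(_ f1) [].
have n01 : f0 != f1 by apply/eqP=> e; move: s0; rewrite e s1.
have n02 : f0 != f2 by apply/eqP=> e; move: s0; rewrite e s2.
have n03 : f0 != f3 by apply/eqP=> e; move: s0; rewrite e s3.
have n12 : f1 != f2 by apply/eqP=> e; move: s1; rewrite e s2.
have n23 : f2 != f3 by apply/eqP=> e; move: s2; rewrite e s3.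
have hex h : size (cyc h) = 6 -> face_edge cyc h x y -> (h == f1) || (h == f3).
  move=> sh /fe_mem; rewrite M => /orP[/eqP e|/orP[->//|/orP[/eqP e|->]]].
  - by move: sh; rewrite e s0.
  - by move: sh; rewrite e s2.
  - by rewrite orbT.
have [y1 y3] : face_edge cyc f1 x y /\ face_edge cyc f3 x y.
  move: (hex _ sg eg) (hex _ sg' eg') => /orP[]/eqP eg1 /orP[]/eqP eg2;
    rewrite eg1 eg2 ?eqxx in ngg eg eg' * => //.
move: (fe_nb U1 a1) (fe_nb U1 b1) (fe_nb U1 y1) => /orP[]/eqP E1 /orP[]/eqP E2 /orP[]/eqP E3;
  subst;
  first [ exact: (three_faces Hpc n01 n02 n12 a0 a1 b2)
        | exact: (three_faces Hpc n01 n03 n13 a0 a1 y3)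
        | exact: (three_faces Hpc n12 n13 n23 b1 b2 y3) ].
Qed.

Lemma vcounts (V F : finType) (cyc : F -> seq V) v : type_3646 cyc ->
  [/\ #|[set f | (v \in cyc f) && (size (cyc f) == 3)]| = 1,
      #|[set f | (v \in cyc f) && (size (cyc f) == 4)]| = 1,
      #|[set f | (v \in cyc f) && (size (cyc f) == 6)]| = 2 &
      #|[set f | v \in cyc f]| = 4].
Proof.
move=> Ht; have [f0 [f1 [f2 [f3 [M [s0 s1 s2 s3] n13 _]]]]] := vertex_info v Ht.
have [_ [_ [_ [_ [_ -> _ _]]]]] := Ht v.
split=> //.
- rewrite (_ : [set f | _ ] = [set f0]) ?cards1 //; apply/setP=> f; rewrite !inE M; apply/idP/idP.
    by case/andP=> /or4P[]/eqP-> ; rewrite ?eqxx ?s1 ?s2 ?s3.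
  by move/eqP->; rewrite eqxx s0.
- rewrite (_ : [set f | _ ] = [set f2]) ?cards1 //; apply/setP=> f; rewrite !inE M; apply/idP/idP.
    by case/andP=> /or4P[]/eqP-> ; rewrite ?eqxx ?s0 ?s1 ?s3.
  by move/eqP->; rewrite eqxx s2 !orbT.
- rewrite (_ : [set f | _ ] = [set f1; f3]) ?cards2 ?n13 //; apply/setP=> f; rewrite !inE M.
  apply/idP/idP.
    by case/andP=> /or4P[]/eqP-> ; rewrite ?eqxx ?s0 ?s2 ?orbT.
  by case/orP=> /eqP->; rewrite eqxx ?s1 ?s3 ?orbT.
Qed.

Lemma face_size (V F : finType) (cyc : F -> seq V) f :
  polyhedral_complex cyc -> type_3646 cyc ->
  [|| size (cyc f) == 3, size (cyc f) == 4 | size (cyc f) == 6].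
Proof.
move=> [/(_ f) [_ sz] _ _] Ht.
have [v vs] : exists v, v \in cyc f.
  by case: (cyc f) sz => [|v s] //= _; exists v; rewrite inE eqxx.
have [f0 [f1 [f2 [f3 [M [s0 s1 s2 s3] _ _]]]]] := vertex_info v Ht.
by move: vs; rewrite M => /or4P[]/eqP->; rewrite ?s0 ?s1 ?s2 ?s3.
Qed.

Lemma face_card (V F : finType) (cyc : F -> seq V) f (b : bool) : uniq (cyc f) ->
  #|[set v | (v \in cyc f) && b]| = b * size (cyc f).
Proof.
move=> U; case: b; rewrite ?andbT ?andbF.
  rewrite mul1n cardsE -(card_uniqP U); apply: eq_card => v; exact: andbT.
by rewrite cardP_sum big1 // => v; rewrite andbF.
Qed.

Lemma count_k (V F : finType) (cyc : F -> seq V) k : polyhedral_complex cyc ->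
  \sum_v #|[set f | (v \in cyc f) && (size (cyc f) == k)]| =
  k * #|[set f | size (cyc f) == k]|.
Proof.
move=> [HU _ _].
rewrite (dcount (fun v f => (v \in cyc f) && (size (cyc f) == k))) cardP_sum big_distrr.
apply: eq_bigr => f _; rewrite face_card; last by case: (HU f).
by case: eqP => [->|_] /=; rewrite ?muln0 ?muln1 ?mul0n ?mul1n.
Qed.

Lemma count_all (V F : finType) (cyc : F -> seq V) : polyhedral_complex cyc ->
  \sum_v #|[set f | v \in cyc f]| = \sum_f size (cyc f).
Proof.
move=> [HU _ _].
rewrite (dcount (fun v f => (v \in cyc f))).
apply: eq_bigr => f _; have := face_card true (proj1 (HU f)); rewrite mul1n => <-.
by apply: eq_card => v; rewrite !inE andbT.
Qed.

Lemma adj_sym (V F : finType) (cyc : F -> seq V) x y : adj cyc x y -> adj cyc y x.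
Proof. by case/existsP=> f H; apply/existsP; exists f; apply: fe_sym. Qed.

Lemma adj_irr (V F : finType) (cyc : F -> seq V) x y : adj cyc x y -> x != y.
Proof. by case/existsP=> f /and3P[]. Qed.

Lemma pairs_count (V F : finType) (cyc : F -> seq V) : polyhedral_complex cyc ->
  #|[set p : V * V | adj cyc p.1 p.2]| = \sum_f size (cyc f).
Proof.
move=> Hpc; have [HU H2 _] := Hpc.
have := dcount (fun (p : V * V) f => face_edge cyc f p.1 p.2).
rewrite (eq_bigr (fun p : V * V => 2 * adj cyc p.1 p.2)); last first.
  move=> p _; case A: (adj cyc p.1 p.2); first by rewrite H2.
  rewrite cardP_sum big1 // => f _; case fe: (face_edge cyc f p.1 p.2) => //.
  suff : adj cyc p.1 p.2 by rewrite A.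
  by apply/existsP; exists f.
rewrite -big_distrr /= -cardP_sum.
rewrite (eq_bigr (fun f => 2 * size (cyc f))); last first.
  by move=> f _; have [U S] := HU f; rewrite -pairs_card.
rewrite -big_distrr /=; move/eqP; rewrite eqn_pmul2l //; by move/eqP.
Qed.

Lemma edges_count (V F : finType) (cyc : F -> seq V) :
  #|[set p : V * V | adj cyc p.1 p.2]| = 2 * #|edges cyc|.
Proof.
rewrite -sum1_card (partition_big_imset (fun p : V * V => [set p.1; p.2])) /=.
rewrite mulnC -sum_nat_const; apply: eq_bigr => e /imsetP[[a b]].
rewrite inE /= => Aab ->.
rewrite sum1dep_card (_ : [set _ | _] = [set (a, b); (b, a)]).
  by rewrite cards2 xpair_eqE negb_and (adj_irr Aab).
apply/setP=> [[c d]]; rewrite !inE /= !xpair_eqE; apply/idP/idP.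
  case/andP=> Acd /eqP E.
  have cd := adj_irr Acd.
  have : c \in [set a; b] by rewrite -E !inE eqxx.
  have : d \in [set a; b] by rewrite -E !inE eqxx orbT.
  rewrite !inE => /orP[]/eqP ? /orP[]/eqP ?; subst; rewrite ?eqxx ?orbT //= in cd *.
case/orP=> /andP[/eqP-> /eqP->]; rewrite ?Aab ?eqxx //= adj_sym //=.
by apply/eqP/setP=> x; rewrite !inE orbC.
Qed.

Lemma hex_inj (V F : finType) (cyc : F -> seq V) :
  polyhedral_complex cyc -> type_3646 cyc ->
  injective (fun v => [set f | (v \in cyc f) && (size (cyc f) == 6)]).
Proof.
move=> Hpc Ht v w E; case: (eqVneq v w) => // nvw; exfalso.
have [f0 [f1 [f2 [f3 [M [s0 s1 s2 s3] n13 _]]]]] := vertex_info v Ht.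
have memw g : v \in cyc g -> size (cyc g) = 6 -> w \in cyc g.
  move=> vg sg; have : g \in [set f | (v \in cyc f) && (size (cyc f) == 6)].
    by rewrite inE vg sg eqxx.
  by rewrite E inE => /andP[].
have v1 : v \in cyc f1 by rewrite M eqxx orbT.
have v3 : v \in cyc f3 by rewrite M eqxx !orbT.
have w1 := memw _ v1 s1; have w3 := memw _ v3 s3.
have [_ _ H3] := Hpc.
case: (H3 _ _ n13) => /=.
  have : [set v; w] \subset [set x | (x \in cyc f1) && (x \in cyc f3)].
    by apply/subsetP=> x; rewrite !inE => /orP[]/eqP->; apply/andP.
  move/subset_leq_card; rewrite cards2 nvw => le1 le2.
  by have := leq_trans le1 le2.
move=> [x [y [_ [e1 e3]]]].
exact: (no_hexhex Hpc Ht n13 s1 s3 e1 e3).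
Qed.

Theorem lemma4p3 (V F : finType) (cyc : F -> seq V) :
  semi_equivelar_3646 cyc -> euler_char cyc <> (-1)%R.
Proof.
move=> [Hpc _ Ht] Hchi.
have cnt k c : (forall v, #|[set f | (v \in cyc f) && (size (cyc f) == k)]| = c) ->
    k * #|[set f | size (cyc f) == k]| = c * #|V|.
  move=> Hc; rewrite -count_k // (eq_bigr (fun _ => c)); last by move=> v _; rewrite Hc.
  by rewrite sum_nat_const mulnC.
have c3 := cnt 3 1 (fun v => let: And4 a _ _ _ := vcounts v Ht in a).
have c4 := cnt 4 1 (fun v => let: And4 _ a _ _ := vcounts v Ht in a).
have c6 := cnt 6 2 (fun v => let: And4 _ _ a _ := vcounts v Ht in a).
have sz : \sum_f size (cyc f) = 4 * #|V|.
  rewrite -count_all // (eq_bigr (fun _ => 4)); last first.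
    by move=> v _; have [_ _ _ ->] := vcounts v Ht.
  by rewrite sum_nat_const mulnC.
have ed := edges_count cyc; rewrite pairs_count // sz in ed.
have fc : #|F| = #|[set f | size (cyc f) == 3]| + #|[set f | size (cyc f) == 4]|
                 + #|[set f | size (cyc f) == 6]|.
  rewrite !cardP_sum -!big_split /= -sum1_card; apply: eq_bigr => f _.
  by move: (face_size f Hpc Ht) => /or3P[]/eqP->.
have bnd : #|V| <= 'C(#|[set f | size (cyc f) == 6]|, 2).
  rewrite -cards_draws -cardsT -(card_imset _ (hex_inj Hpc Ht)).
  apply: subset_leq_card; apply/subsetP=> A /imsetP[v _ ->]; rewrite inE.
  have [_ _ -> _] := vcounts v Ht; rewrite eqxx andbT.
  by apply/subsetP=> f; rewrite !inE => /andP[].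
move: Hchi; rewrite /euler_char => Hchi.
have h6 : #|[set f | size (cyc f) == 6]| = 4 by lia.
have C42 : 'C(4, 2) = 6 by [].
rewrite h6 C42 in bnd; lia.
Qed.
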